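(* Let $X,Y$ be non-empty subsets of $A^+$, and say that $XY$ is a strong alt-induced code (via $(X,Y)$) when $(X,Y)$ is a strong alternative code. (i) $XY$ is a prefix strong alt-induced code via $(X,Y)$ if and only if $X$ is a prefix code and $Y$ is a bifix code; and $XY$ is a maximal prefix strong alt-induced code via $(X,Y)$ if and only if $X$ is a maximal prefix code and $Y$ is both a maximal prefix code and a bifix code. (ii) $XY$ is a suffix strong alt-induced code via $(X,Y)$ if and only if $X$ is a bifix code and $Y$ is a suffix code; and $XY$ is a maximal suffix strong alt-induced code via $(X,Y)$ if and only if $X$ is both a maximal suffix code and a bifix code and $Y$ is a maximal suffix code. (iii) $XY$ is a bifix (resp. thin maximal bifix) strong alt-induced code via $(X,Y)$ if and only if $X$ and $Y$ are bifix (resp. thin maximal bifix) codes.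
   Context: $A$ is a finite alphabet, $A^*$ the set of words, $A^+$ the non-empty words, $XY=\{xy:x\in X,y\in Y\}$. For $X,Z\subseteq A^*$: $X^{-1}Z=\{u\in A^*: xu\in Z \text{ for some } x\in X\}$, $ZY^{-1}=\{u\in A^*: uy\in Z\text{ for some } y\in Y\}$. A code is a subset of $A^+$ in which every word has at most one factorization into its elements. A prefix (suffix) code is a subset of $A^+$ in which no word is a proper prefix (suffix) of another; a bifix code is both; such a code is maximal if not properly contained in another prefix (suffix, bifix) code over $A$. A set is thin if some word of $A^*$ is not a factor of any of its words. For non-empty $X,Y\subseteq A^+$, $(X,Y)$ is an alternative code if $XY$ is a code and each element of $XY$ has exactly one factorization $xy$ with $x\in X,y\in Y$ (equivalently, no word admits two different similar alternative factorizations on $(X,Y)$). It is a strong alternative code if moreover $X^{-1}(XY)\subseteq Y$ and $(XY)Y^{-1}\subseteq X$. A prefix (maximal prefix, suffix, ...) strong alt-induced code is a strong alt-induced code that is also a prefix (maximal prefix, suffix, ...) code. *)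

(* Defs.v *)
From mathcomp Require Import all_boot.
Set Implicit Arguments. Unset Strict Implicit. Unset Printing Implicit Defensive.

Definition lang (A : finType) := seq A -> Prop.

Section Words.
Variable A : finType.

Definition subl (X Y : lang A) : Prop := forall w, X w -> Y w.
Definition nonemptyl (X : lang A) : Prop := exists w, X w.
Definition in_plus (X : lang A) : Prop := forall w, X w -> 0 < size w.

Definition catl (X Y : lang A) : lang A :=
  fun w => exists x y, [/\ X x, Y y & w = x ++ y].
Definition lquot (X Z : lang A) : lang A :=
  fun u => exists x, X x /\ Z (x ++ u).
Definition rquot (Z Y : lang A) : lang A :=
  fun u => exists y, Y y /\ Z (u ++ y).

Definition is_code (C : lang A) : Prop :=
  in_plus C /\
  forall xs ys : seq (seq A),
    (forall x, x \in xs -> C x) -> (forall y, y \in ys -> C y) ->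
    flatten xs = flatten ys -> xs = ys.

Definition prefix_code (C : lang A) : Prop :=
  in_plus C /\ forall u v, C u -> C v -> prefix u v -> u = v.
Definition suffix_code (C : lang A) : Prop :=
  in_plus C /\ forall u v, C u -> C v -> suffix u v -> u = v.
Definition bifix_code (C : lang A) : Prop := prefix_code C /\ suffix_code C.

Definition maximal_prefix_code (C : lang A) : Prop :=
  prefix_code C /\ forall D, prefix_code D -> subl C D -> subl D C.
Definition maximal_suffix_code (C : lang A) : Prop :=
  suffix_code C /\ forall D, suffix_code D -> subl C D -> subl D C.
Definition maximal_bifix_code (C : lang A) : Prop :=
  bifix_code C /\ forall D, bifix_code D -> subl C D -> subl D C.

Definition thin (C : lang A) : Prop :=
  exists w : seq A, forall x, C x -> ~~ infix w x.

Definition alt_code (X Y : lang A) : Prop :=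
  [/\ nonemptyl X, nonemptyl Y, in_plus X, in_plus Y &
      is_code (catl X Y) /\
      forall x y x' y', X x -> Y y -> X x' -> Y y' ->
        x ++ y = x' ++ y' -> x = x' /\ y = y'].

Definition strong_alt_code (X Y : lang A) : Prop :=
  [/\ alt_code X Y, subl (lquot X (catl X Y)) Y & subl (rquot (catl X Y) Y) X].

End Words.

(* Main.v *)
From Stdlib Require Import Classical FunctionalExtensionality PropExtensionality IndefiniteDescription.
Require Import Defs.
From mathcomp Require Import all_boot zify.

Set Implicit Arguments. Unset Strict Implicit. Unset Printing Implicit Defensive.

Section W.
Variable A : finType.
Implicit Types (s u v a b c d : seq A) (C X Y D : lang A).

Lemma catsI s a b : s ++ a = s ++ b -> a = b.
Proof. by elim: s => //= x s IH [] /IH. Qed.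

Lemma catIs s a b : a ++ s = b ++ s -> a = b.
Proof.
move=> H; have Hs: size a = size b.
  by have := congr1 size H; rewrite !size_cat => /eqP; rewrite eqn_add2r => /eqP.
by move/eqP: H; rewrite eqseq_cat // => /andP[/eqP].
Qed.

Lemma prefix_cmp a b s : prefix a s -> prefix b s -> prefix a b \/ prefix b a.
Proof.
move=> Ha Hb; move: Ha Hb; rewrite [prefix a s]prefixE [prefix b s]prefixE => /eqP Ha /eqP Hb.
case: (leqP (size a) (size b)) => H.
  by left; rewrite prefixE -[in take _ b]Hb take_takel // Ha.
by right; rewrite prefixE -[in take _ a]Ha take_takel ?Hb // ltnW.
Qed.

Lemma cat_cmp a b c d : a ++ b = c ++ d -> prefix a c \/ prefix c a.
Proof. by move=> H; apply: (@prefix_cmp a c (a ++ b)); rewrite ?prefix_prefix // H prefix_prefix. Qed.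

Lemma suffix_cmp a b s : suffix a s -> suffix b s -> suffix a b \/ suffix b a.
Proof. by rewrite -!prefix_rev => H1 H2; apply: prefix_cmp H1 H2. Qed.

Lemma prefixPc a b : prefix a b <-> exists s, b = a ++ s.
Proof. by split => /prefixP. Qed.
Lemma suffixPc a b : suffix a b <-> exists s, b = s ++ a.
Proof. by split => /suffixP. Qed.


Lemma pc_code C : prefix_code C -> is_code C.
Proof.
move=> [Hp Hpc]; split => //.
elim=> [|x xs IH] [|y ys] Hx Hy //=.
- move=> H; have Hy0 := Hp _ (Hy y (mem_head _ _)).
  by have := congr1 size H; rewrite size_cat /=; case: (size y) Hy0.
- move=> H; have Hx0 := Hp _ (Hx x (mem_head _ _)).
  by have := congr1 size H; rewrite size_cat /=; case: (size x) Hx0.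
move=> H.
have Cx := Hx x (mem_head _ _); have Cy := Hy y (mem_head _ _).
have exy : x = y.
  by case: (cat_cmp H) => Hc; [apply: Hpc|apply/esym/Hpc].
subst y; move/catsI: H => H; congr (_ :: _); apply: IH H.
  by move=> z Hz; apply: Hx; rewrite inE Hz orbT.
by move=> z Hz; apply: Hy; rewrite inE Hz orbT.
Qed.

Lemma cat_pc X Y : prefix_code X -> prefix_code Y -> prefix_code (catl X Y).
Proof.
move=> [HpX HX] [HpY HY]; split.
  by move=> w [x [y [Cx Cy ->]]]; rewrite size_cat; have := HpX _ Cx; case: (size x).
move=> _ _ [x [y [Cx Cy ->]]] [x' [y' [Cx' Cy' ->]]] Hp.
have H1 : prefix x (x' ++ y') by apply: catl_prefix Hp.
have exx : x = x'.
  by case: (prefix_cmp H1 (prefix_prefix x' y')) => Hc; [apply: HX|apply/esym/HX].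
subst x'; move: Hp; rewrite prefix_catr // eqxx /= => Hp.
by rewrite (HY _ _ Cy Cy' Hp).
Qed.

Lemma cat_sc X Y : suffix_code X -> suffix_code Y -> suffix_code (catl X Y).
Proof.
move=> [HpX HX] [HpY HY]; split.
  by move=> w [x [y [Cx Cy ->]]]; rewrite size_cat; have := HpX _ Cx; case: (size x).
move=> _ _ [x [y [Cx Cy ->]]] [x' [y' [Cx' Cy' ->]]] Hp.
have H1 : suffix y (x' ++ y') by apply: catl_suffix Hp.
have eyy : y = y'.
  by case: (suffix_cmp H1 (suffix_suffix x' y')) => Hc; [apply: HY|apply/esym/HY].
subst y'; move: Hp; rewrite suffix_catl // eqxx /= => Hp.
by rewrite (HX _ _ Cx Cx' Hp).
Qed.

Lemma G1 X Y : strong_alt_code X Y -> prefix_code X.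
Proof.
move=> [[_ [y0 Y0] HpX _ [_ Huf]] Hl _]; split => // x1 x2 C1 C2 /prefixP [s Hs].
have Ysy : Y (s ++ y0).
  apply: Hl; exists x1; split => //; exists x2, y0; split => //.
  by rewrite Hs catA.
have := Huf _ _ _ _ C1 Ysy C2 Y0; rewrite Hs -catA.
by move=> /(_ erefl) [].
Qed.

Lemma G2 X Y : strong_alt_code X Y -> suffix_code Y.
Proof.
move=> [[[x0 X0] _ _ HpY [_ Huf]] _ Hr]; split => // y1 y2 C1 C2 /suffixP [s Hs].
have Xxs : X (x0 ++ s).
  apply: Hr; exists y1; split => //; exists x0, y2; split => //.
  by rewrite Hs catA.
have := Huf _ _ _ _ Xxs C1 X0 C2; rewrite Hs -catA.
by move=> /(_ erefl) [] /(congr1 size); rewrite size_cat -{2}[size x0]addn0 => /eqP;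
  rewrite eqn_add2l size_eq0 => /eqP ->.
Qed.

Lemma S_of X Y : nonemptyl X -> nonemptyl Y -> prefix_code X -> suffix_code Y ->
  is_code (catl X Y) -> strong_alt_code X Y.
Proof.
move=> NX NY [HpX HX] [HpY HY] Hc; split.
- split => //; split => // x y x' y' Cx Cy Cx' Cy' H.
  have exx : x = x' by case: (cat_cmp H) => Hc'; [apply: HX|apply/esym/HX].
  by subst x'; split => //; apply: catsI H.
- move=> u [x [Cx [x' [y' [Cx' Cy' H]]]]].
  have exx : x = x' by case: (cat_cmp H) => Hc'; [apply: HX|apply/esym/HX].
  by subst x'; move/catsI: H => ->.
- move=> u [y [Cy [x' [y' [Cx' Cy' H]]]]].
  have H1 : suffix y (x' ++ y') by rewrite -H suffix_suffix.
  have eyy : y = y'.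
    by case: (suffix_cmp H1 (suffix_suffix x' y')) => Hc'; [apply: HY|apply/esym/HY].
  by subst y'; move/catIs: H => ->.
Qed.


Definition revl C : lang A := fun w => C (rev w).

Lemma revlK C : revl (revl C) = C.
Proof. by apply: functional_extensionality => w; rewrite /revl revK. Qed.

Lemma revl_cat X Y : revl (catl X Y) = catl (revl Y) (revl X).
Proof.
apply: functional_extensionality => w; apply: propositional_extensionality.
rewrite /revl /catl; split.
  move=> [x [y [Cx Cy H]]]; exists (rev y), (rev x); rewrite !revK; split => //.
  by rewrite -rev_cat -H revK.
move=> [y [x [Cy Cx ->]]]; exists (rev x), (rev y); split => //.
by rewrite rev_cat.
Qed.

Lemma inplus_rev C : in_plus C -> in_plus (revl C).
Proof. by move=> H w /H; rewrite size_rev. Qed.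

Lemma ne_rev C : nonemptyl C -> nonemptyl (revl C).
Proof. by move=> [w Hw]; exists (rev w); rewrite /revl revK. Qed.

Lemma pc_rev C : suffix_code C -> prefix_code (revl C).
Proof.
move=> [Hp H]; split; first exact: inplus_rev.
by move=> u v Cu Cv; rewrite -suffix_rev => /(H _ _ Cu Cv) /(congr1 rev); rewrite !revK.
Qed.

Lemma sc_rev C : prefix_code C -> suffix_code (revl C).
Proof.
move=> [Hp H]; split; first exact: inplus_rev.
by move=> u v Cu Cv; rewrite -prefix_rev => /(H _ _ Cu Cv) /(congr1 rev); rewrite !revK.
Qed.

Lemma pc_revE C : prefix_code (revl C) <-> suffix_code C.
Proof. by split => [/sc_rev|/pc_rev //]; rewrite revlK. Qed.
Lemma sc_revE C : suffix_code (revl C) <-> prefix_code C.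
Proof. by split => [/pc_rev|/sc_rev //]; rewrite revlK. Qed.

Lemma bif_revE C : bifix_code (revl C) <-> bifix_code C.
Proof. by rewrite /bifix_code pc_revE sc_revE; split => -[]. Qed.

Lemma subl_rev C D : subl C D -> subl (revl C) (revl D).
Proof. by move=> H w; apply: H. Qed.

Lemma maxpc_rev C : maximal_suffix_code C -> maximal_prefix_code (revl C).
Proof.
move=> [Hs Hm]; split; first exact: pc_rev.
move=> D HD HCD; rewrite -(revlK D); apply: subl_rev; apply: Hm.
  by rewrite -pc_revE revlK.
by rewrite -(revlK C); apply: subl_rev.
Qed.

Lemma maxsc_rev C : maximal_prefix_code C -> maximal_suffix_code (revl C).
Proof.
move=> [Hs Hm]; split; first exact: sc_rev.
move=> D HD HCD; rewrite -(revlK D); apply: subl_rev; apply: Hm.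
  by rewrite -sc_revE revlK.
by rewrite -(revlK C); apply: subl_rev.
Qed.

Lemma maxpc_revE C : maximal_prefix_code (revl C) <-> maximal_suffix_code C.
Proof. by split => [/maxsc_rev|/maxpc_rev //]; rewrite revlK. Qed.
Lemma maxsc_revE C : maximal_suffix_code (revl C) <-> maximal_prefix_code C.
Proof. by split => [/maxpc_rev|/maxsc_rev //]; rewrite revlK. Qed.

Lemma code_rev C : is_code C -> is_code (revl C).
Proof.
move=> [Hp H]; split; first exact: inplus_rev.
move=> xs ys Hx Hy Hf.
have Hm : forall zs, (forall z, z \in zs -> revl C z) ->
    forall z, z \in rev (map rev zs) -> C z.
  move=> zs Hz z; rewrite mem_rev => /mapP [z' Hz' ->]; exact: Hz.
have := H _ _ (Hm _ Hx) (Hm _ Hy); rewrite -!rev_flatten Hf => /(_ erefl).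
move/(congr1 rev); rewrite !revK => /(congr1 (map rev)); rewrite -!map_comp.
by rewrite !(eq_map (f := rev \o rev) (g := id) (@revK _)) !map_id.
Qed.

Lemma sac_rev X Y : strong_alt_code X Y -> strong_alt_code (revl Y) (revl X).
Proof.
move=> [[NX NY PX PY [Hc Huf]] Hl Hr]; split; first split.
- exact: ne_rev.
- exact: ne_rev.
- exact: inplus_rev.
- exact: inplus_rev.
- split; first by rewrite -revl_cat; apply: code_rev.
  move=> y x y' x' Cy Cx Cy' Cx' H.
  have := Huf _ _ _ _ Cx Cy Cx' Cy'; rewrite -!rev_cat H => /(_ erefl) [] /(congr1 rev) + /(congr1 rev).
  by rewrite !revK.
- rewrite -revl_cat => u [y [Cy Hc']]; apply: Hr; exists (rev y); split => //.
  by move: Hc'; rewrite /revl rev_cat.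
- rewrite -revl_cat => u [x [Cx Hc']]; apply: Hl; exists (rev x); split => //.
  by move: Hc'; rewrite /revl rev_cat.
Qed.

Lemma sac_revE X Y : strong_alt_code (revl Y) (revl X) <-> strong_alt_code X Y.
Proof. by split => [/sac_rev|/sac_rev //]; rewrite !revlK. Qed.


Lemma part_ia X Y : nonemptyl X -> nonemptyl Y ->
  (strong_alt_code X Y /\ prefix_code (catl X Y)) <-> (prefix_code X /\ bifix_code Y).
Proof.
move=> NX NY; split.
  move=> [S [_ P]]; split; first exact: (G1 S).
  split; last exact: (G2 S).
  have [[[x0 X0] _ _ PY _] _ _] := S; split => // y1 y2 C1 C2 Hp.
  apply: (@catsI x0 y1 y2); apply: P; [by exists x0, y1|by exists x0, y2|].
  by rewrite prefix_catr // eqxx.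
move=> [PX [PY SY]]; have P := cat_pc PX PY; split => //.
by apply: S_of => //; apply: pc_code.
Qed.

Lemma RC C (a0 : A) : maximal_prefix_code C ->
  forall u, exists x, C x /\ (prefix x u \/ prefix u x).
Proof.
move=> [[Hp HC] Hm] u; apply: NNPP => Hn.
have Hn' : forall x, C x -> ~ prefix x u /\ ~ prefix u x.
  by move=> x Cx; split => H; apply: Hn; exists x; split; auto.
pose u' := rcons u a0.
have Hu : prefix u u' by apply: prefix_rcons.
pose D : lang A := fun s => C s \/ s = u'.
have PD : prefix_code D.
  split.
    by move=> w [/Hp //|->]; rewrite size_rcons.
  move=> p q [Cp|->] [Cq|->] H.
  - exact: HC.
  - by case: (prefix_cmp H Hu) => H'; case: (Hn' _ Cp).
  - by case: (Hn' _ Cq) => _ []; apply: prefix_trans Hu H.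
  - by [].
have : C u' by apply: (Hm D PD) => [w Cw|]; [left|right].
by move=> /Hn' [_ []].
Qed.

Lemma RC_max C : prefix_code C -> (forall u, exists x, C x /\ (prefix x u \/ prefix u x)) ->
  maximal_prefix_code C.
Proof.
move=> PC Hc; split => // D [_ PD] HCD d Dd.
have [x [Cx [H|H]]] := Hc d.
  by rewrite -(PD _ _ (HCD _ Cx) Dd H).
by rewrite (PD _ _ Dd (HCD _ Cx) H).
Qed.

Lemma part_ib X Y : nonemptyl X -> nonemptyl Y ->
  (strong_alt_code X Y /\ maximal_prefix_code (catl X Y)) <->
     [/\ maximal_prefix_code X, maximal_prefix_code Y & bifix_code Y].
Proof.
move=> NX NY; split.
  move=> [S [P M]].
  have [PX [PY SY]] := proj1 (part_ia NX NY) (conj S P).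
  have [[[x0 X0] [y0 Y0] _ _ _] Hl Hr] := S.
  split => //; split => // D PD HD d Dd.
  - have Hc : catl X Y (d ++ y0).
      apply: (M (catl D Y) (cat_pc PD PY)); last by exists d, y0.
      by move=> w [x [y [Cx Cy ->]]]; exists x, y; split => //; apply: HD.
    by apply: Hr; exists y0; split.
  - have Hc : catl X Y (x0 ++ d).
      apply: (M (catl X D) (cat_pc PX PD)); last by exists x0, d.
      by move=> w [x [y [Cx Cy ->]]]; exists x, y; split => //; apply: HD.
    by apply: Hl; exists x0; split.
move=> [MX MY BY].
have [S P] := proj2 (part_ia NX NY) (conj (proj1 MX) BY).
split => //; split => // D [_ PD] H d Dd.
have [x0 X0] := NX; have [y0 Y0] := NY.
have := proj1 (proj1 MX) _ X0; case Ex0: x0 => [|a0 r] // _.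
have [x [Cx [Hxd|Hdx]]] := RC a0 MX d.
  move/prefixP: Hxd => [s Es].
  have [y [Cy [Hys|Hsy]]] := RC a0 MY s.
  - have Hc : catl X Y (x ++ y) by exists x, y.
    have Hp : prefix (x ++ y) d by rewrite Es prefix_catr // eqxx.
    by rewrite -(PD _ _ (H _ Hc) Dd Hp).
  - have Hc : catl X Y (x ++ y) by exists x, y.
    have Hp : prefix d (x ++ y) by rewrite Es prefix_catr // eqxx.
    by rewrite (PD _ _ Dd (H _ Hc) Hp).
have Hc : catl X Y (x ++ y0) by exists x, y0.
have Hp : prefix d (x ++ y0) by apply: prefix_catl.
by rewrite (PD _ _ Dd (H _ Hc) Hp).
Qed.

End W.
Lemma card_rel (T T' : finType) (R : T -> T' -> Prop) :
  (forall d, exists c, R d c) -> (forall d d' c, R d c -> R d' c -> d = d') ->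
  #|T| <= #|T'|.
Proof.
move=> Htot Hinj.
pose f d := proj1_sig (constructive_indefinite_description _ (Htot d)).
have Hf d : R d (f d) by rewrite /f; case: constructive_indefinite_description.
apply: (@leq_card _ _ f) => d d' E.
by apply: (Hinj d d' (f d)) => //; rewrite E.
Qed.

Section L.
Variable A : finType.
Definition star (C : lang A) (t : seq A) :=
  exists xs : seq (seq A), (forall x, x \in xs -> C x) /\ t = flatten xs.

Variable C : lang A.
Hypothesis PC : prefix_code C.
Hypothesis SC : suffix_code C.
Hypothesis MB : forall D, bifix_code D -> subl C D -> subl D C.
Variable w : seq A.
Hypothesis hw : forall x, C x -> ~~ infix w x.
Hypothesis NC : nonemptyl C.
Variable u : seq A.
Hypothesis Hu : forall x, C x -> ~ prefix x u /\ ~ prefix u x.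

Lemma w_ne : 0 < size w.
Proof.
have [x0 X0] := NC; have := hw X0; case: w => //=.
by rewrite infix0s.
Qed.

Lemma stepb v : exists q x, C x /\ w ++ v = q ++ x.
Proof.
apply: NNPP => Hn.
pose z := u ++ w ++ v.
have Iz : infix w z by apply: infix_infix.
have nz : forall q, C q -> infix z q -> False.
  by move=> q Cq H; have := hw Cq; rewrite (infix_trans Iz H).
pose D : lang A := fun s => C s \/ s = z.
have PD : prefix_code D.
  split.
    move=> s [/(proj1 PC) //|->]; rewrite /z !size_cat; have := w_ne; lia.
  move=> p q [Cp|->] [Cq|->] H.
  - exact: (proj2 PC).
  - by case: (prefix_cmp H (prefix_prefix u (w ++ v))) => H'; case: (Hu Cp).
  - by case: (nz _ Cq (prefixW H)).
  - by [].
have SD : suffix_code D.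
  split; first exact: (proj1 PD).
  move=> p q [Cp|->] [Cq|->] H.
  - exact: (proj2 SC).
  - case: (suffix_cmp H (suffix_suffix u (w ++ v))) => H'.
      by move/suffixP: H' => [q0 Hq]; case: Hn; exists q0, p.
    have := hw Cp; rewrite (infix_trans (prefix_infix w v) (suffixW H')) //.
  - by case: (nz _ Cq (suffixW H)).
  - by [].
have Cz : C z by apply: (MB (conj PD SD)) => [s Cs|]; [left|right].
by have := hw Cz; rewrite Iz.
Qed.

Lemma stepc v : exists p t, [/\ size p < size w, star C t & w ++ v = p ++ t].
Proof.
suff: forall n v, size v < n -> exists p t, [/\ size p < size w, star C t & w ++ v = p ++ t].
  by move=> /(_ (size v).+1 v); apply.
elim=> [//|n IH] {}v Hv.
have [q [x [Cx E]]] := stepb v.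
have Hx := proj1 PC _ Cx.
case: (ltnP (size q) (size w)) => Hq.
  exists q, x; split => //; exists [:: x]; split; last by rewrite /= cats0.
  by move=> y; rewrite inE => /eqP ->.
have Hwq : prefix w q.
  case: (cat_cmp (esym E)) => // /prefixP [r Er].
  have : size r = 0 by move: Hq; rewrite Er size_cat -[X in _ <= X]addn0 leq_add2l leqn0 => /eqP.
  by move/size0nil => Er0; rewrite Er Er0 cats0 prefix_refl.
have [v' Ev'] : exists v' : seq A, q = w ++ v' by move/prefixP: Hwq => [v0 E0]; exists v0.
have Ev : v = v' ++ x by apply: (@catsI _ w); rewrite E Ev' catA.
have Hv' : size v' < n by move: Hv; rewrite Ev size_cat ltnS => H; apply: leq_trans H; rewrite -[X in X < _]addn0 ltn_add2l.
have [p [t [Hp [xs [Hxs Et]] E2]]] := IH v' Hv'.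
exists p, (t ++ x); split => //.
  exists (xs ++ [:: x]); split; last by rewrite flatten_cat /= cats0 Et.
  by move=> y; rewrite mem_cat inE => /orP [/Hxs //| /eqP ->].
by rewrite Ev catA E2 catA.
Qed.

Lemma stepd xs xs' y y' : (forall x, x \in xs -> C x) -> (forall x, x \in xs' -> C x) ->
  flatten xs ++ u ++ y = flatten xs' ++ u ++ y' -> flatten xs = flatten xs'.
Proof.
elim: xs xs' => [|x xs IH] [|x' xs'] //= Hx Hx'.
- move=> H; have C' := Hx' x' (mem_head _ _); rewrite -catA in H.
  by have [N1 N2] := Hu C'; case: (cat_cmp H) => H'; [case: (N2 H')|case: (N1 H')].
- move=> H; have C' := Hx x (mem_head _ _); rewrite -catA in H.
  by have [N1 N2] := Hu C'; case: (cat_cmp H) => H'; [case: (N1 H')|case: (N2 H')].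
rewrite -!catA => H.
have Cx := Hx x (mem_head _ _); have Cx' := Hx' x' (mem_head _ _).
have exx : x = x'.
  by case: (cat_cmp H) => Hc; [apply: (proj2 PC)|apply/esym/(proj2 PC)].
subst x'; congr (_ ++ _); apply: IH (catsI H).
  by move=> z Hz; apply: Hx; rewrite inE Hz orbT.
by move=> z Hz; apply: Hx'; rewrite inE Hz orbT.
Qed.

Lemma L_false : False.
Proof.
pose n := size w; pose m := size u; pose k := #|A|.
pose K := n * k ^ m.
have kpos : 0 < k.
  have := w_ne; rewrite /k; case: w => // a _ _; apply/card_gt0P; by exists a.
pose R (d : ('I_K.+1 * K.-tuple A)%type) (c : ('I_n * (K + m).-tuple A)%type) :=
  val c.2 = take d.1 d.2 ++ u ++ drop d.1 d.2 /\
  exists p t, [/\ size p = val c.1, star C t & w ++ take d.1 d.2 = p ++ t].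
have Hle := @card_rel _ _ R.
have : #|{: 'I_K.+1 * K.-tuple A}| <= #|{: 'I_n * (K + m).-tuple A}|.
  apply: Hle.
  - move=> [i s]; have [p [t [Hp Ht E]]] := stepc (take i s).
    have Hsz : size (take i s ++ u ++ drop i s) == K + m.
      by rewrite !size_cat addnA [_ + size u]addnC -addnA -size_cat cat_take_drop size_tuple addnC.
    by exists (Ordinal Hp, Tuple Hsz); split => //; exists p, t.
  - move=> [i s] [i' s'] [j z] /= [Ez [p [t [Hp Ht E]]]] [Ez' [p' [t' [Hp' Ht' E']]]].
    have EE : p ++ t ++ u ++ drop i s = p' ++ t' ++ u ++ drop i' s'.
      by rewrite catA -E -catA -Ez Ez' catA E' -catA.
    move/eqP: EE; rewrite eqseq_cat ?Hp ?Hp' // => /andP [/eqP epp /eqP EE].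
    have ett : t = t'.
      move: EE; case: Ht => [xs [Hxs ->]]; case: Ht' => [xs' [Hxs' ->]] => EE.
      exact: (stepd Hxs Hxs' EE).
    subst t'.
    have si : size (take i s) = i by rewrite size_takel // size_tuple -ltnS.
    have si' : size (take i' s') = i' by rewrite size_takel // size_tuple -ltnS.
    have eii : i = i' :> nat.
      have := congr1 size E; have := congr1 size E'; rewrite !size_cat si si' Hp Hp'.
      lia.
    move: Ez'; rewrite /= in Ez *; rewrite Ez => /eqP; rewrite eqseq_cat ?si ?si' // => /andP [/eqP et /eqP ed].
    move/catsI: ed => ed.
    have ess : s = s' :> seq A by rewrite -(cat_take_drop i s) -(cat_take_drop i' s') et ed.
    by congr (_, _); apply: val_inj.
rewrite !card_prod !card_ord !card_tuple.
have : 0 < k ^ K by rewrite expn_gt0 kpos.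
rewrite /K expnD; move: (k ^ (n * k ^ m)) => a.
rewrite /k; move: (#|A| ^ m) => b; nia.
Qed.

End L.

Lemma L_maxpc (A : finType) (C : lang A) : maximal_bifix_code C -> thin C -> nonemptyl C ->
  maximal_prefix_code C.
Proof.
move=> [[PC SC] MB] [w hw] NC; apply: RC_max => // u; apply: NNPP => Hn.
apply: (@L_false A C PC SC MB w hw NC u) => x Cx; split => H; apply: Hn; exists x; split; auto.
Qed.

Section Final.
Variable A : finType.
Implicit Types (X Y : lang A).
Notation pe := propositional_extensionality.

Lemma part_iia X Y : nonemptyl X -> nonemptyl Y ->
  (strong_alt_code X Y /\ suffix_code (catl X Y)) <-> (bifix_code X /\ suffix_code Y).
Proof.
move=> NX NY; have H := part_ia (ne_rev NY) (ne_rev NX).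
rewrite -revl_cat (pe _ _ (sac_revE X Y)) !(pe _ _ (pc_revE _)) (pe _ _ (bif_revE _)) in H.
tauto.
Qed.

Lemma part_iib X Y : nonemptyl X -> nonemptyl Y ->
  (strong_alt_code X Y /\ maximal_suffix_code (catl X Y)) <->
     [/\ maximal_suffix_code X, bifix_code X & maximal_suffix_code Y].
Proof.
move=> NX NY; have H := part_ib (ne_rev NY) (ne_rev NX).
rewrite -revl_cat (pe _ _ (sac_revE X Y)) !(pe _ _ (maxpc_revE _)) (pe _ _ (bif_revE _)) in H.
rewrite H; split; case; split => //.
Qed.

Lemma part_iiia X Y : nonemptyl X -> nonemptyl Y ->
  (strong_alt_code X Y /\ bifix_code (catl X Y)) <-> (bifix_code X /\ bifix_code Y).
Proof.
move=> NX NY; split.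
  move=> [S [P Sf]].
  have [PX BY] := proj1 (part_ia NX NY) (conj S P).
  by have [BX _] := proj1 (part_iia NX NY) (conj S Sf).
move=> [BX BY].
have [S P] := proj2 (part_ia NX NY) (conj (proj1 BX) BY).
have [_ Sf] := proj2 (part_iia NX NY) (conj BX (proj2 BY)).
by split => //; split.
Qed.

Lemma part_iiib X Y : nonemptyl X -> nonemptyl Y ->
  (strong_alt_code X Y /\ (thin (catl X Y) /\ maximal_bifix_code (catl X Y))) <->
     ((thin X /\ maximal_bifix_code X) /\ (thin Y /\ maximal_bifix_code Y)).
Proof.
move=> NX NY; split.
  move=> [S [[w Hw] [B M]]].
  have [BX BY] := proj1 (part_iiia NX NY) (conj S B).
  have [[[x0 X0] [y0 Y0] _ _ _] Hl Hr] := S.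
  split; split.
  - exists w => x Cx; apply/negP => Hi.
    have Hc : catl X Y (x ++ y0) by exists x, y0.
    by have := Hw _ Hc; rewrite (infix_catr _ Hi).
  - split => // D BD HD d Dd.
    have BDY : bifix_code (catl D Y).
      by split; [apply: cat_pc (proj1 BD) (proj1 BY)|apply: cat_sc (proj2 BD) (proj2 BY)].
    have Hc : catl X Y (d ++ y0).
      apply: (M _ BDY); last by exists d, y0.
      by move=> v [x [y [Cx Cy ->]]]; exists x, y; split => //; apply: HD.
    by apply: Hr; exists y0; split.
  - exists w => y Cy; apply/negP => Hi.
    have Hc : catl X Y (x0 ++ y) by exists x0, y.
    by have := Hw _ Hc; rewrite (infix_catl _ Hi).
  - split => // D BD HD d Dd.
    have BXD : bifix_code (catl X D).
      by split; [apply: cat_pc (proj1 BX) (proj1 BD)|apply: cat_sc (proj2 BX) (proj2 BD)].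
    have Hc : catl X Y (x0 ++ d).
      apply: (M _ BXD); last by exists x0, d.
      by move=> v [x [y [Cx Cy ->]]]; exists x, y; split => //; apply: HD.
    by apply: Hl; exists x0; split.
move=> [[TX MX] [TY MY]].
have [S B] := proj2 (part_iiia NX NY) (conj (proj1 MX) (proj1 MY)).
split => //; split.
  have [w1 H1] := TX; have [w2 H2] := TY.
  exists (w1 ++ w2) => _ [x [y [Cx Cy ->]]]; apply/negP => /infixP [a [b E]].
  have Hp1 : prefix (a ++ w1) (x ++ y) by rewrite E; apply/prefixP; exists (w2 ++ b); rewrite -!catA.
  case: (prefix_cmp Hp1 (prefix_prefix x y)) => /prefixP [r Er].
    by have := H1 _ Cx; rewrite Er -catA infix_infix.
  have Ey : y = r ++ w2 ++ b.
    by apply: (@catsI _ x); rewrite E; transitivity ((a ++ w1) ++ w2 ++ b); [rewrite -!catA|rewrite Er -!catA].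
  by have := H2 _ Cy; rewrite Ey infix_infix.
split => // D BD HD.
have MPX := L_maxpc MX TX NX; have MPY := L_maxpc MY TY NY.
have [_ [_ MP]] := proj2 (part_ib NX NY) (And3 MPX MPY (proj1 MY)).
exact: MP D (proj1 BD) HD.
Qed.

End Final.

Theorem theoremT (A : finType) (X Y : lang A) :
  nonemptyl X -> nonemptyl Y -> in_plus X -> in_plus Y ->
  (* (i) *)
  ((strong_alt_code X Y /\ prefix_code (catl X Y)) <->
     (prefix_code X /\ bifix_code Y)) /\
  ((strong_alt_code X Y /\ maximal_prefix_code (catl X Y)) <->
     [/\ maximal_prefix_code X, maximal_prefix_code Y & bifix_code Y]) /\
  (* (ii) *)
  ((strong_alt_code X Y /\ suffix_code (catl X Y)) <->
     (bifix_code X /\ suffix_code Y)) /\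
  ((strong_alt_code X Y /\ maximal_suffix_code (catl X Y)) <->
     [/\ maximal_suffix_code X, bifix_code X & maximal_suffix_code Y]) /\
  (* (iii) *)
  ((strong_alt_code X Y /\ bifix_code (catl X Y)) <->
     (bifix_code X /\ bifix_code Y)) /\
  ((strong_alt_code X Y /\ (thin (catl X Y) /\ maximal_bifix_code (catl X Y))) <->
     ((thin X /\ maximal_bifix_code X) /\ (thin Y /\ maximal_bifix_code Y))).
Proof.
move=> NX NY _ _.
split; first exact: part_ia.
split; first exact: part_ib.
split; first exact: part_iia.
split; first exact: part_iib.
split; first exact: part_iiia.
exact: part_iiib.
Qed.
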